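(* For a semiring $(S,+,\cdot)$ the following are equivalent: (i) $S$ is a b-lattice of nil-extensions of left skew-rings; (ii) $S$ is a quasi completely regular semiring and for all $e,f\in E^+(S)$ there exists a positive integer $n$ such that $n(e+f)=n(e+f+e)$; (iii) $S$ is additively quasi regular, $b^2\,\mathscr{H}^{*^{+}}\,b$ for all $b\in S$, and for all $a,x\in S$, $a=a+x+a$ implies $a+x=a+2x+a$.
   Context: A semiring $(S,+,\cdot)$ has two associative operations with $a(b+c)=ab+ac$, $(b+c)a=ba+ca$. $na$ is the $n$-fold sum of $a$; $b^2=b\cdot b$. $E^+(S)$ is the set of additive idempotents. $a$ is additively regular if $a=a+x+a$ for some $x$; $S$ is additively quasi regular if for each $a$ some $na$ is additively regular. $a$ is completely regular if there is $x$ with $a=a+x+a$, $a+x=x+a$, $a(a+x)=a+x$; $S$ is quasi completely regular if for each $a$ some $na$ is completely regular. Green's relations of $(S,+)$: $\mathscr{L}^+,\mathscr{R}^+$. For additively quasi regular $S$, $m(a)$ is the least positive integer with $m(a)a$ additively regular; $a\,\mathscr{L}^{*^{+}}\,b$ iff $m(a)a\,\mathscr{L}^+\,m(b)b$, $a\,\mathscr{R}^{*^{+}}\,b$ iff $m(a)a\,\mathscr{R}^+\,m(b)b$, $\mathscr{H}^{*^{+}}=\mathscr{L}^{*^{+}}\cap\mathscr{R}^{*^{+}}$. A skew-ring is a semiring whose additive reduct is a (not necessarily commutative) group. A left zero semiring is a semiring with $(S,\cdot)$ a band and $(S,+)$ a left zero band ($a+b=a$ for all $a,b$). A left skew-ring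 is a semiring isomorphic to a direct product (componentwise operations) of a left zero semiring and a skew-ring. $S$ is a nil-extension of a subsemiring $K$ if $K$ is a bi-ideal ($a\in K,x\in S\Rightarrow a+x,x+a,ax,xa\in K$) and every $a\in S$ has some $na\in K$. A b-lattice is a semiring with $(S,\cdot)$ a band and $(S,+)$ a semilattice; $S$ is a b-lattice of semirings of a class if there is a congruence $\rho$ on $S$ with $S/\rho$ a b-lattice and each $\rho$-class a subsemiring in that class. *)

(* Defs.v *)
Set Implicit Arguments.
(* No commutativity of add, no zero or one is assumed. *)

Section Semiring.
Variable S : Type.
Variables add mul : S -> S -> S.

Definition is_semiring : Prop :=
  (forall a b c, add a (add b c) = add (add a b) c) /\
  (forall a b c, mul a (mul b c) = mul (mul a b) c) /\
  (forall a b c, mul a (add b c) = add (mul a b) (mul a c)) /\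
  (forall a b c, mul (add b c) a = add (mul b a) (mul c a)).

(* n-fold sum n a = a + ... + a (n copies); only meaningful for n >= 1,
   and every use below requires 0 < n (value at n = 0 is junk: a). *)
Fixpoint nsum (n : nat) (a : S) : S :=
  match n with
  | 0 => a
  | 1 => a
  | Datatypes.S m => add (nsum m a) a
  end.

Definition add_idem (e : S) : Prop := add e e = e.

Definition add_regular (a : S) : Prop := exists x, a = add (add a x) a.

Definition add_quasi_regular : Prop :=
  forall a, exists n, 0 < n /\ add_regular (nsum n a).

Definition completely_regular (a : S) : Prop :=
  exists x, a = add (add a x) a /\ add a x = add x a /\ mul a (add a x) = add a x.

Definition quasi_completely_regular : Prop :=
  forall a, exists n, 0 < n /\ completely_regular (nsum n a).

(* Green's relations of the semigroup (S,+) (computed in S^1). *)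
Definition greenL (a b : S) : Prop :=
  (a = b \/ exists x, a = add x b) /\ (b = a \/ exists y, b = add y a).
Definition greenR (a b : S) : Prop :=
  (a = b \/ exists x, a = add b x) /\ (b = a \/ exists y, b = add a y).

Definition is_m (a : S) (n : nat) : Prop :=
  0 < n /\ add_regular (nsum n a) /\
  (forall k, 0 < k -> add_regular (nsum k a) -> n <= k).

Definition Lstar (a b : S) : Prop :=
  forall ma mb, is_m a ma -> is_m b mb -> greenL (nsum ma a) (nsum mb b).
Definition Rstar (a b : S) : Prop :=
  forall ma mb, is_m a ma -> is_m b mb -> greenR (nsum ma a) (nsum mb b).
Definition Hstar (a b : S) : Prop := Lstar a b /\ Rstar a b.

End Semiring.

Definition left_zero_semiring (L : Type) (addL mulL : L -> L -> L) : Prop :=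
  is_semiring addL mulL /\ (forall a, mulL a a = a) /\ (forall a b, addL a b = a).

Definition skew_ring (R : Type) (addR mulR : R -> R -> R) : Prop :=
  is_semiring addR mulR /\
  exists z : R, (forall a, addR z a = a /\ addR a z = a) /\
    (forall a, exists b, addR a b = z /\ addR b a = z).

(* The subset K of S (assumed closed under add, mul) with the induced
   operations is a left skew-ring: it is isomorphic (via f restricted to K)
   to the direct product of a left zero semiring and a skew-ring. *)
Definition left_skew_ring_on (S : Type) (add mul : S -> S -> S) (K : S -> Prop)
  : Prop :=
  exists (L : Type) (addL mulL : L -> L -> L) (R : Type) (addR mulR : R -> R -> R)
         (f : S -> L * R),
    left_zero_semiring addL mulL /\ skew_ring addR mulR /\
    (forall x y, K x -> K y -> f x = f y -> x = y) /\
    (forall p, exists x, K x /\ f x = p) /\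
    (forall x y, K x -> K y ->
       f (add x y) = (addL (fst (f x)) (fst (f y)), addR (snd (f x)) (snd (f y)))) /\
    (forall x y, K x -> K y ->
       f (mul x y) = (mulL (fst (f x)) (fst (f y)), mulR (snd (f x)) (snd (f y)))).

Definition subsemiring (S : Type) (add mul : S -> S -> S) (T : S -> Prop) : Prop :=
  forall x y, T x -> T y -> T (add x y) /\ T (mul x y).

Definition nil_ext_left_skew_ring_on (S : Type) (add mul : S -> S -> S)
  (T : S -> Prop) : Prop :=
  exists K : S -> Prop,
    (forall x, K x -> T x) /\
    (forall a x, K a -> T x ->
       K (add a x) /\ K (add x a) /\ K (mul a x) /\ K (mul x a)) /\
    (forall a, T a -> exists n, 0 < n /\ K (nsum add n a)) /\
    left_skew_ring_on add mul K.

Definition b_lattice_of_nil_ext_left_skew_rings (S : Type) (add mul : S -> S -> S)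
  : Prop :=
  exists rho : S -> S -> Prop,
    (forall a, rho a a) /\ (forall a b, rho a b -> rho b a) /\
    (forall a b c, rho a b -> rho b c -> rho a c) /\
    (forall a b c, rho a b -> rho (add a c) (add b c) /\ rho (add c a) (add c b) /\
                              rho (mul a c) (mul b c) /\ rho (mul c a) (mul c b)) /\
    (* S/rho is a b-lattice *)
    (forall a, rho (mul a a) a) /\ (forall a, rho (add a a) a) /\
    (forall a b, rho (add a b) (add b a)) /\
    (forall a, subsemiring add mul (rho a) /\ nil_ext_left_skew_ring_on add mul (rho a)).

(* Main.v *)
Require Import Defs.
From Stdlib Require Import Lia PeanoNat Classical ClassicalEpsilon ProofIrrelevance.

Section Main.
Variable X : Type.
Variables add mul : X -> X -> X.
Hypothesis HS : is_semiring add mul.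
Local Infix "⊕" := add (at level 50, left associativity).
Local Infix "⊗" := mul (at level 40, left associativity).
Local Notation ns := (nsum add).

Lemma addA : forall a b c, a ⊕ (b ⊕ c) = a ⊕ b ⊕ c.
Proof. destruct HS as [H _]; exact H. Qed.
Lemma mulA : forall a b c, a ⊗ (b ⊗ c) = a ⊗ b ⊗ c.
Proof. destruct HS as [_ [H _]]; exact H. Qed.
Lemma mulDl : forall a b c, a ⊗ (b ⊕ c) = a ⊗ b ⊕ a ⊗ c.
Proof. destruct HS as [_ [_ [H _]]]; exact H. Qed.
Lemma mulDr : forall a b c, (b ⊕ c) ⊗ a = b ⊗ a ⊕ c ⊗ a.
Proof. destruct HS as [_ [_ [_ H]]]; exact H. Qed.

Ltac aac := repeat rewrite addA; reflexivity.

Lemma nsum_S : forall n a, 0 < n -> ns (S n) a = ns n a ⊕ a.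
Proof. intros [|n] a H; [lia|reflexivity]. Qed.

Lemma nsum_swap : forall n a, ns n a ⊕ a = a ⊕ ns n a.
Proof.
  induction n as [|n IH]; intros a; [reflexivity|].
  destruct n as [|n]; [reflexivity|].
  rewrite nsum_S by lia. rewrite (IH a). rewrite <- addA. rewrite (IH a). reflexivity.
Qed.

Lemma nsum_Sl : forall n a, 0 < n -> ns (S n) a = a ⊕ ns n a.
Proof. intros n a H. rewrite nsum_S by exact H. apply nsum_swap. Qed.

Lemma nsum_add : forall m n a, 0 < n -> 0 < m -> ns (n + m) a = ns n a ⊕ ns m a.
Proof.
  induction m as [|m IH]; intros n a Hn Hm; [lia|].
  destruct m as [|m].
  - replace (n + 1) with (S n) by lia. rewrite nsum_S by lia. reflexivity.
  - replace (n + S (S m)) with (S (n + S m)) by lia.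
    rewrite nsum_S by lia. rewrite IH by lia. rewrite (nsum_S (S m)) by lia. aac.
Qed.

Lemma nsum_mul : forall m n a, 0 < n -> 0 < m -> ns (n * m) a = ns m (ns n a).
Proof.
  induction m as [|m IH]; intros n a Hn Hm; [lia|].
  destruct m as [|m].
  - rewrite Nat.mul_1_r. reflexivity.
  - replace (n * S (S m)) with (n * S m + n) by lia.
    rewrite nsum_add by lia. rewrite IH by lia. rewrite (nsum_S (S m)) by lia. reflexivity.
Qed.

Lemma nsum_comm : forall m n a, 0 < n -> 0 < m -> ns m (ns n a) = ns n (ns m a).
Proof.
  intros m n a Hn Hm. rewrite <- !nsum_mul by lia. rewrite Nat.mul_comm. reflexivity.
Qed.

Lemma nsum_idem : forall n e, e ⊕ e = e -> ns n e = e.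
Proof.
  induction n as [|n IH]; intros e He; [reflexivity|].
  destruct n as [|n]; [reflexivity|].
  rewrite nsum_S by lia. rewrite IH by exact He. exact He.
Qed.

Lemma nsum_mulr : forall n a b, ns n (a ⊗ b) = ns n a ⊗ b.
Proof.
  induction n as [|n IH]; intros a b; [reflexivity|].
  destruct n as [|n]; [reflexivity|].
  rewrite (nsum_S (S n) (a ⊗ b)), (nsum_S (S n) a) by lia. rewrite IH. rewrite mulDr. reflexivity.
Qed.

Lemma nsum_mull : forall n a b, ns n (a ⊗ b) = a ⊗ ns n b.
Proof.
  induction n as [|n IH]; intros a b; [reflexivity|].
  destruct n as [|n]; [reflexivity|].
  rewrite (nsum_S (S n) (a ⊗ b)), (nsum_S (S n) b) by lia. rewrite IH. rewrite mulDl. reflexivity.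
Qed.

Lemma nsum_absorb_l : forall n e r, e ⊕ r = r -> e ⊕ ns n r = ns n r.
Proof.
  induction n as [|n IH]; intros e r H; [exact H|].
  destruct n as [|n]; [exact H|].
  rewrite nsum_S by lia. rewrite addA. rewrite IH by exact H. reflexivity.
Qed.

Lemma nsum_absorb_r : forall n f r, r ⊕ f = r -> ns n r ⊕ f = ns n r.
Proof.
  induction n as [|n IH]; intros f r H; [exact H|].
  destruct n as [|n]; [exact H|].
  rewrite nsum_S by lia. rewrite <- addA. rewrite H. reflexivity.
Qed.

Lemma nsum_conj : forall n c e, e ⊕ c = c -> 0 < n -> ns n (c ⊕ e) = ns n c ⊕ e.
Proof.
  induction n as [|n IH]; intros c e H Hn; [lia|].
  destruct n as [|n]; [reflexivity|].
  rewrite !nsum_S by lia. rewrite IH by (auto; lia).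
  replace (ns (S n) c ⊕ e ⊕ (c ⊕ e)) with (ns (S n) c ⊕ (e ⊕ c) ⊕ e) by aac.
  rewrite H. reflexivity.
Qed.

Definition ingroup (u e : X) : Prop :=
  e ⊕ e = e /\ e ⊕ u = u /\ u ⊕ e = u /\ exists v, u ⊕ v = e /\ v ⊕ u = e.

Lemma ingroup_idem : forall e, e ⊕ e = e -> ingroup e e.
Proof. intros e He. repeat split; auto. exists e. auto. Qed.

Lemma ingroup_add : forall u w e, ingroup u e -> ingroup w e -> ingroup (u ⊕ w) e.
Proof.
  intros u w e [He [Hl [Hr [v [Hv1 Hv2]]]]] [_ [Hl' [Hr' [v' [Hv1' Hv2']]]]].
  repeat split; auto.
  - rewrite addA, Hl. reflexivity.
  - rewrite <- addA, Hr'. reflexivity.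
  - exists (v' ⊕ v). split.
    + replace (u ⊕ w ⊕ (v' ⊕ v)) with (u ⊕ (w ⊕ v') ⊕ v) by aac.
      rewrite Hv1', Hr. exact Hv1.
    + replace (v' ⊕ v ⊕ (u ⊕ w)) with (v' ⊕ (v ⊕ u) ⊕ w) by aac.
      rewrite Hv2, <- addA, Hl'. exact Hv2'.
Qed.

Lemma ingroup_nsum : forall n u e, 0 < n -> ingroup u e -> ingroup (ns n u) e.
Proof.
  induction n as [|n IH]; intros u e Hn H; [lia|].
  destruct n as [|n]; [exact H|].
  rewrite nsum_S by lia. apply ingroup_add; auto. apply IH; auto; lia.
Qed.

Lemma ingroup_unique : forall u e f, ingroup u e -> ingroup u f -> e = f.
Proof.
  intros u e f [He [Hl [Hr [v [Hv1 Hv2]]]]] [Hf [Hl' [Hr' [v' [Hv1' Hv2']]]]].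
  assert (E1 : e ⊕ f = e).
  { rewrite <- Hv2 at 1. rewrite <- addA, Hr'. exact Hv2. }
  assert (E2 : e ⊕ f = f).
  { rewrite <- Hv1'. rewrite addA, Hl. reflexivity. }
  congruence.
Qed.

Lemma ingroup_idem_eq : forall x e, ingroup x e -> x ⊕ x = x -> x = e.
Proof.
  intros x e [He [Hl [Hr [v [Hv1 Hv2]]]]] Hx.
  assert (x ⊕ (x ⊕ v) = x) by (rewrite Hv1; exact Hr).
  rewrite addA, Hx, Hv1 in H. congruence.
Qed.

Lemma ingroup_reg : forall u e, ingroup u e -> add_regular add u.
Proof.
  intros u e [He [Hl [Hr [v [Hv1 Hv2]]]]]. exists v. rewrite Hv1. congruence.
Qed.


Lemma ingroup_inv : forall x e, ingroup x e -> exists b, ingroup b e /\ x ⊕ b = e /\ b ⊕ x = e.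
Proof.
  intros x e [He [Hl [Hr [v [Hv1 Hv2]]]]].
  exists (e ⊕ v ⊕ e). split; [|split].
  - split; [auto|split; [|split]].
    + rewrite !addA, He. reflexivity.
    + rewrite <- addA, He. reflexivity.
    + exists x. split.
      * replace (e ⊕ v ⊕ e ⊕ x) with (e ⊕ v ⊕ (e ⊕ x)) by aac. rewrite Hl.
        rewrite <- addA, Hv2. exact He.
      * replace (x ⊕ (e ⊕ v ⊕ e)) with (x ⊕ e ⊕ v ⊕ e) by aac. rewrite Hr, Hv1. exact He.
  - replace (x ⊕ (e ⊕ v ⊕ e)) with (x ⊕ e ⊕ v ⊕ e) by aac. rewrite Hr, Hv1. exact He.
  - replace (e ⊕ v ⊕ e ⊕ x) with (e ⊕ v ⊕ (e ⊕ x)) by aac. rewrite Hl.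
    rewrite <- addA, Hv2. exact He.
Qed.

Lemma pow_back : forall x v, x = x ⊕ x ⊕ v -> forall k, 0 < k -> exists s, x = ns k x ⊕ s.
Proof.
  intros x v H.
  assert (Hs : forall k, 0 < k -> ns k x = ns (S k) x ⊕ v).
  { induction k as [|k IH]; intros Hk; [lia|].
    destruct k as [|k].
    - simpl. exact H.
    - rewrite (nsum_S (S (S k))) by lia. rewrite (nsum_S (S k)) by lia.
      replace (ns (S k) x ⊕ x ⊕ x ⊕ v) with (ns (S k) x ⊕ (x ⊕ x ⊕ v)) by aac.
      rewrite <- H. reflexivity. }
  induction k as [|k IH]; intros Hk; [lia|].
  destruct k as [|k].
  - exists (x ⊕ v). simpl. rewrite addA. exact H.
  - destruct IH as [s Hs'] ; [lia|].
    exists (v ⊕ s). rewrite Hs' at 1. rewrite (Hs (S k)) by lia. aac.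
Qed.

Section Core.
Hypothesis C1 : forall a, exists n, 0 < n /\ add_regular add (ns n a).
Hypothesis KL : forall r x, r = r ⊕ x ⊕ r -> ingroup r (r ⊕ x).
Hypothesis C3 : forall e, e ⊕ e = e -> e ⊗ e = e.

Definition zero (a e : X) : Prop := exists n, 0 < n /\ ingroup (ns n a) e.

Lemma zero_ex : forall a, exists e, zero a e.
Proof.
  intros a. destruct (C1 a) as [n [Hn [x Hx]]].
  exists (ns n a ⊕ x). exists n. split; auto.
Qed.

Definition zr (a : X) : X := proj1_sig (constructive_indefinite_description _ (zero_ex a)).

Lemma zr_spec : forall a, zero a (zr a).
Proof. intros a. unfold zr. destruct (constructive_indefinite_description _ _) as [e He]. exact He. Qed.

Lemma zero_uniq : forall a e f, zero a e -> zero a f -> e = f.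
Proof.
  intros a e f [n [Hn He]] [m [Hm Hf]].
  apply (ingroup_unique (ns m (ns n a))).
  - apply ingroup_nsum; auto.
  - rewrite nsum_comm by auto. apply ingroup_nsum; auto.
Qed.

Lemma zr_eq : forall a e, zero a e -> zr a = e.
Proof. intros a e H. exact (zero_uniq _ _ _ (zr_spec a) H). Qed.

Lemma zr_idem : forall a, zr a ⊕ zr a = zr a.
Proof. intros a. destruct (zr_spec a) as [n [_ [H _]]]. exact H. Qed.

Lemma zr_group : forall u e, ingroup u e -> zr u = e.
Proof. intros u e H. apply zr_eq. exists 1. split; [lia|exact H]. Qed.

Lemma zr_of_idem : forall e, e ⊕ e = e -> zr e = e.
Proof. intros e He. apply zr_group. apply ingroup_idem. exact He. Qed.

Lemma zr_nsum : forall n a, 0 < n -> zr (ns n a) = zr a.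
Proof.
  intros n a Hn. apply zr_eq. destruct (zr_spec a) as [m [Hm Hg]].
  exists m. split; auto. rewrite nsum_comm by auto. apply ingroup_nsum; auto.
Qed.

Lemma zr_big : forall c, exists m, 1 < m /\ ingroup (ns m c) (zr c).
Proof.
  intros c. destruct (zr_spec c) as [n [Hn Hg]].
  exists (n + n). split; [lia|]. rewrite nsum_add by auto. apply ingroup_add; auto.
Qed.

Lemma zr_right : forall c, exists w, zr c = c ⊕ w.
Proof.
  intros c. destruct (zr_big c) as [m [Hm [_ [_ [_ [v [Hv1 Hv2]]]]]]].
  replace m with (S (m - 1)) in Hv1 by lia. rewrite nsum_Sl in Hv1 by lia.
  exists (ns (m-1) c ⊕ v). rewrite <- Hv1. aac.
Qed.

Lemma zr_left : forall c, exists w, zr c = w ⊕ c.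
Proof.
  intros c. destruct (zr_big c) as [m [Hm [_ [_ [_ [v [Hv1 Hv2]]]]]]].
  replace m with (S (m - 1)) in Hv2 by lia. rewrite nsum_S in Hv2 by lia.
  exists (v ⊕ ns (m-1) c). rewrite <- Hv2. aac.
Qed.

Lemma reg_group : forall u, add_regular add u -> ingroup u (zr u).
Proof.
  intros u [x Hx]. pose proof (KL _ _ Hx) as H. rewrite (zr_group _ _ H). exact H.
Qed.

Definition prec (e a : X) : Prop := exists y, e ⊕ a ⊕ y = e.

Lemma prec_refl : forall e, e ⊕ e = e -> prec e e.
Proof. intros e He. exists e. rewrite !He. reflexivity. Qed.

Lemma W : forall e a, e ⊕ e = e -> prec e a -> ingroup (e ⊕ a) e.
Proof.
  intros e a He [y Hy].
  assert (H : e ⊕ a = e ⊕ a ⊕ y ⊕ (e ⊕ a)).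
  { rewrite Hy. rewrite addA, He. reflexivity. }
  pose proof (KL _ _ H) as H'. rewrite Hy in H'. exact H'.
Qed.

Lemma prec_self : forall a, prec (zr a) a.
Proof.
  intros a. destruct (zr_right a) as [w Hw]. exists w.
  rewrite <- addA, <- Hw. apply zr_idem.
Qed.

Lemma prec_addl : forall e a b, prec e (a ⊕ b) -> prec e a.
Proof.
  intros e a b [y Hy]. exists (b ⊕ y).
  replace (e ⊕ a ⊕ (b ⊕ y)) with (e ⊕ (a ⊕ b) ⊕ y) by aac. exact Hy.
Qed.

Lemma prec_idem : forall e f, e ⊕ e = e -> f ⊕ f = f -> prec e f -> e ⊕ f = e.
Proof.
  intros e f He Hf H. pose proof (W _ _ He H) as Hg.
  apply (ingroup_idem_eq _ _ Hg).
  destruct Hg as [_ [_ [Hr _]]].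
  replace (e ⊕ f ⊕ (e ⊕ f)) with (e ⊕ f ⊕ e ⊕ f) by aac.
  rewrite Hr. rewrite <- addA, Hf. reflexivity.
Qed.

Lemma prec_trans : forall e f a, e ⊕ e = e -> f ⊕ f = f -> prec e f -> prec f a -> prec e a.
Proof.
  intros e f a He Hf H1 [z Hz]. pose proof (prec_idem _ _ He Hf H1) as H.
  exists z. rewrite <- H at 1.
  replace (e ⊕ f ⊕ a ⊕ z) with (e ⊕ (f ⊕ a ⊕ z)) by aac. rewrite Hz. exact H.
Qed.

Lemma prec_zr : forall e a, e ⊕ e = e -> prec e a -> prec e (zr a).
Proof.
  intros e a He H. pose proof (W _ _ He H) as Hp. set (p := e ⊕ a) in *.
  assert (Hc : forall k, 0 < k -> e ⊕ ns k a = ns k p).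
  { induction k as [|k IH]; intros Hk; [lia|].
    destruct k as [|k]; [reflexivity|].
    rewrite (nsum_S (S k) a) by lia. rewrite (nsum_S (S k) p) by lia.
    rewrite addA, IH by lia.
    assert (Hg : ingroup (ns (S k) p) e) by (apply ingroup_nsum; auto; lia).
    destruct Hg as [_ [_ [Hr _]]].
    replace (ns (S k) p ⊕ p) with (ns (S k) p ⊕ e ⊕ a) by (unfold p; aac).
    rewrite Hr. reflexivity. }
  destruct (zr_spec a) as [n [Hn Hu]].
  assert (Hg : ingroup (ns n p) e) by (apply ingroup_nsum; auto).
  destruct Hg as [_ [_ [_ [w [Hw _]]]]].
  destruct Hu as [_ [Hl _]].
  exists (ns n a ⊕ w).
  replace (e ⊕ zr a ⊕ (ns n a ⊕ w)) with (e ⊕ (zr a ⊕ ns n a) ⊕ w) by aac.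
  rewrite Hl, Hc by auto. exact Hw.
Qed.

Lemma prec_add : forall e a b, e ⊕ e = e -> prec e a -> prec e b -> prec e (a ⊕ b).
Proof.
  intros e a b He Ha [y' Hb].
  pose proof (W _ _ He Ha) as [_ [_ [Hr _]]].
  destruct Ha as [y Hy]. exists (y' ⊕ y).
  replace (e ⊕ (a ⊕ b) ⊕ (y' ⊕ y)) with (e ⊕ a ⊕ b ⊕ y' ⊕ y) by aac.
  rewrite <- Hr.
  replace (e ⊕ a ⊕ e ⊕ b ⊕ y' ⊕ y) with (e ⊕ a ⊕ (e ⊕ b ⊕ y') ⊕ y) by aac.
  rewrite Hb, Hr. exact Hy.
Qed.

Lemma F1 : forall a b, prec (zr (a ⊕ b)) b.
Proof.
  intros a b. set (g := zr (a ⊕ b)).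
  assert (Hg : g ⊕ g = g) by apply zr_idem.
  destruct (zr_right (a ⊕ b)) as [w Hw]. fold g in Hw.
  assert (H1 : g ⊕ a ⊕ (b ⊕ w) = g).
  { replace (g ⊕ a ⊕ (b ⊕ w)) with (g ⊕ (a ⊕ b ⊕ w)) by aac. rewrite <- Hw. exact Hg. }
  assert (H2 : g ⊕ a = g ⊕ a ⊕ (b ⊕ w) ⊕ (g ⊕ a)).
  { rewrite H1. rewrite addA, Hg. reflexivity. }
  pose proof (KL _ _ H2) as Hk. rewrite H1 in Hk.
  destruct Hk as [_ [_ [_ [v [_ Hv]]]]].
  exists (w ⊕ g ⊕ a).
  rewrite <- Hv at 1.
  replace (v ⊕ (g ⊕ a) ⊕ b ⊕ (w ⊕ g ⊕ a)) with (v ⊕ (g ⊕ a ⊕ (b ⊕ w) ⊕ (g ⊕ a))) by aac.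
  rewrite <- H2. exact Hv.
Qed.

Lemma prec_addr : forall e a b, e ⊕ e = e -> prec e (a ⊕ b) -> prec e b.
Proof.
  intros e a b He H. apply (prec_trans _ (zr (a ⊕ b))); auto.
  - apply zr_idem.
  - apply prec_zr; auto.
  - apply F1.
Qed.


Definition le (a b : X) : Prop := prec (zr a) b.
Definition rho (a b : X) : Prop := le a b /\ le b a.

Lemma le_refl : forall a, le a a.
Proof. intros a. apply prec_self. Qed.

Lemma le_trans : forall a b c, le a b -> le b c -> le a c.
Proof.
  unfold le. intros a b c H1 H2.
  apply (prec_trans _ (zr b)); try apply zr_idem; auto.
  apply prec_zr; auto. apply zr_idem.
Qed.

Lemma le_addl : forall a b, le (a ⊕ b) a.
Proof. intros a b. apply (prec_addl _ _ b). apply prec_self. Qed.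

Lemma le_addr : forall a b, le (a ⊕ b) b.
Proof. intros a b. apply F1. Qed.

Lemma le_glb : forall a b c, le c a -> le c b -> le c (a ⊕ b).
Proof. unfold le. intros a b c H1 H2. apply prec_add; auto. apply zr_idem. Qed.

Lemma prec_mull : forall e a c, prec e a -> prec (c ⊗ e) (c ⊗ a).
Proof. intros e a c [y Hy]. exists (c ⊗ y). rewrite <- !mulDl, Hy. reflexivity. Qed.

Lemma prec_mulr : forall e a c, prec e a -> prec (e ⊗ c) (a ⊗ c).
Proof. intros e a c [y Hy]. exists (y ⊗ c). rewrite <- !mulDr, Hy. reflexivity. Qed.

Lemma idem_mull : forall e c, e ⊕ e = e -> c ⊗ e ⊕ c ⊗ e = c ⊗ e.
Proof. intros e c He. rewrite <- mulDl, He. reflexivity. Qed.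

Lemma idem_mulr : forall e c, e ⊕ e = e -> e ⊗ c ⊕ e ⊗ c = e ⊗ c.
Proof. intros e c He. rewrite <- mulDr, He. reflexivity. Qed.

Lemma KM_l : forall c a, prec (zr (c ⊗ a)) (c ⊗ zr a).
Proof.
  intros c a. destruct (zr_spec a) as [n [Hn Hu]]. destruct Hu as [_ [Hl _]].
  rewrite <- (zr_nsum n (c ⊗ a)) by auto. rewrite nsum_mull.
  pose proof (prec_self (c ⊗ ns n a)) as P.
  set (g := zr (c ⊗ ns n a)) in *.
  assert (E : c ⊗ ns n a = c ⊗ zr a ⊕ c ⊗ ns n a) by (rewrite <- mulDl, Hl; reflexivity).
  rewrite E in P. exact (prec_addl _ _ _ P).
Qed.

Lemma KM_r : forall c a, prec (zr (a ⊗ c)) (zr a ⊗ c).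
Proof.
  intros c a. destruct (zr_spec a) as [n [Hn Hu]]. destruct Hu as [_ [_ [Hr _]]].
  rewrite <- (zr_nsum n (a ⊗ c)) by auto. rewrite nsum_mulr.
  pose proof (prec_self (ns n a ⊗ c)) as P.
  assert (Hg : zr (ns n a ⊗ c) ⊕ zr (ns n a ⊗ c) = zr (ns n a ⊗ c)) by apply zr_idem.
  set (g := zr (ns n a ⊗ c)) in *.
  assert (E : ns n a ⊗ c = ns n a ⊗ c ⊕ zr a ⊗ c) by (rewrite <- mulDr, Hr; reflexivity).
  rewrite E in P. exact (prec_addr _ _ _ Hg P).
Qed.

Lemma le_mull : forall a b c, le a b -> le (c ⊗ a) (c ⊗ b).
Proof.
  unfold le. intros a b c H.
  assert (Ha := zr_idem a). assert (Hb := zr_idem b).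
  apply (prec_trans _ (c ⊗ zr a)); [apply zr_idem|apply idem_mull; auto|apply KM_l|].
  apply (prec_trans _ (c ⊗ zr b)); [apply idem_mull; auto|apply idem_mull; auto| |].
  - apply prec_mull. apply prec_zr; auto.
  - apply prec_mull. apply prec_self.
Qed.

Lemma le_mulr : forall a b c, le a b -> le (a ⊗ c) (b ⊗ c).
Proof.
  unfold le. intros a b c H.
  assert (Ha := zr_idem a). assert (Hb := zr_idem b).
  apply (prec_trans _ (zr a ⊗ c)); [apply zr_idem|apply idem_mulr; auto|apply KM_r|].
  apply (prec_trans _ (zr b ⊗ c)); [apply idem_mulr; auto|apply idem_mulr; auto| |].
  - apply prec_mulr. apply prec_zr; auto.
  - apply prec_mulr. apply prec_self.
Qed.

Lemma le_sq1 : forall a, le (a ⊗ a) a.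
Proof.
  unfold le. intros a. assert (Ha := zr_idem a).
  apply (prec_trans _ (a ⊗ zr a)); [apply zr_idem|apply idem_mull; auto|apply KM_l|].
  apply (prec_trans _ (zr a)); [apply idem_mull; auto|auto| |apply prec_self].
  pose proof (KM_r (zr a) a) as P. rewrite zr_of_idem in P by (apply idem_mull; auto).
  rewrite C3 in P by auto. exact P.
Qed.

Lemma le_sq2 : forall a, le a (a ⊗ a).
Proof.
  unfold le. intros a. assert (Ha := zr_idem a).
  rewrite <- (C3 _ Ha) at 1.
  apply (prec_trans _ (zr a ⊗ a)); [rewrite C3; auto|apply idem_mulr; auto| |].
  - apply prec_mull. apply prec_self.
  - apply prec_mulr. apply prec_self.
Qed.

Lemma rho_refl : forall a, rho a a.
Proof. intros a; split; apply le_refl. Qed.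
Lemma rho_sym : forall a b, rho a b -> rho b a.
Proof. intros a b [H1 H2]; split; auto. Qed.
Lemma rho_trans : forall a b c, rho a b -> rho b c -> rho a c.
Proof. intros a b c [H1 H2] [H3 H4]; split; eapply le_trans; eauto. Qed.
Lemma rho_addr : forall a b c, rho a b -> rho (a ⊕ c) (b ⊕ c).
Proof.
  intros a b c [H1 H2]; split; apply le_glb; try apply le_addr;
  eapply le_trans; try apply le_addl; auto.
Qed.
Lemma rho_addl : forall a b c, rho a b -> rho (c ⊕ a) (c ⊕ b).
Proof.
  intros a b c [H1 H2]; split; apply le_glb; try apply le_addl;
  eapply le_trans; try apply le_addr; auto.
Qed.
Lemma rho_mulr : forall a b c, rho a b -> rho (a ⊗ c) (b ⊗ c).
Proof. intros a b c [H1 H2]; split; apply le_mulr; auto. Qed.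
Lemma rho_mull : forall a b c, rho a b -> rho (c ⊗ a) (c ⊗ b).
Proof. intros a b c [H1 H2]; split; apply le_mull; auto. Qed.
Lemma rho_comm : forall a b, rho (a ⊕ b) (b ⊕ a).
Proof. intros a b; split; apply le_glb; first [apply le_addl | apply le_addr]. Qed.
Lemma rho_addidem : forall a, rho (a ⊕ a) a.
Proof. intros a; split; [apply le_addl|apply le_glb; apply le_refl]. Qed.
Lemma rho_sq : forall a, rho (a ⊗ a) a.
Proof. intros a; split; [apply le_sq1|apply le_sq2]. Qed.

Lemma rho_zr : forall a, rho a (zr a).
Proof.
  intros a. split.
  - unfold le. apply prec_refl. apply zr_idem.
  - unfold le. rewrite zr_of_idem by apply zr_idem. apply prec_self.
Qed.

Lemma idem_rho : forall e f, e ⊕ e = e -> f ⊕ f = f -> rho e f -> e ⊕ f = e.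
Proof.
  intros e f He Hf [H _]. unfold le in H. rewrite zr_of_idem in H by auto.
  apply prec_idem; auto.
Qed.

Lemma RegMulR : forall x y, add_regular add x -> ingroup (x ⊗ y) (zr x ⊗ y).
Proof.
  intros x y Hx. pose proof (reg_group _ Hx) as Hg.
  destruct Hg as [He [Hl _]].
  assert (P : prec (zr x ⊗ y) (x ⊗ y)) by (apply prec_mulr; apply prec_self).
  pose proof (W _ _ (idem_mulr _ y He) P) as H.
  rewrite <- mulDr, Hl in H. exact H.
Qed.

Lemma RegAddR : forall x y, add_regular add x -> le x y -> ingroup (x ⊕ y) (zr x).
Proof.
  intros x y Hx H. pose proof (reg_group _ Hx) as Hg.
  pose proof (W _ _ (zr_idem x) H) as Hp.
  destruct Hg as [He [Hl [Hr Hv]]].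
  replace (x ⊕ y) with (x ⊕ (zr x ⊕ y)) by (rewrite addA, Hr; reflexivity).
  apply ingroup_add; [split; auto | exact Hp].
Qed.

Lemma RegAddL : forall x y, add_regular add x -> le x y -> add_regular add (y ⊕ x).
Proof.
  intros x y Hx H. pose proof (reg_group _ Hx) as Hg.
  set (e := zr x) in *. assert (He : e ⊕ e = e) by apply zr_idem.
  pose proof (W _ _ He H) as Hp.
  destruct Hp as [_ [Hpl [Hpr [v [Hv1 Hv2]]]]].
  set (a := y ⊕ e).
  assert (Ha : a = a ⊕ a ⊕ v).
  { unfold a. replace (y ⊕ e ⊕ (y ⊕ e) ⊕ v) with (y ⊕ ((e ⊕ y) ⊕ e) ⊕ v) by aac.
    rewrite Hpr. replace (y ⊕ (e ⊕ y) ⊕ v) with (y ⊕ (e ⊕ y ⊕ v)) by aac.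
    rewrite Hv1. reflexivity. }
  destruct (zr_spec a) as [m [Hm Hu]].
  destruct (pow_back _ _ Ha m Hm) as [s Hs].
  assert (Hha : zr a ⊕ a = a).
  { rewrite Hs at 2. destruct Hu as [_ [Hl _]]. rewrite addA, Hl. auto. }
  assert (Hag : ingroup a (zr a)).
  { pose proof (W _ _ (zr_idem a) (prec_self a)) as G. rewrite Hha in G. exact G. }
  assert (Phe : prec (zr a) e) by (unfold a; apply F1).
  assert (Phx : prec (zr a) x).
  { apply (prec_trans _ e); auto. apply zr_idem. apply prec_self. }
  pose proof (W _ _ (zr_idem a) Phx) as Hhx.
  apply (ingroup_reg _ (zr a)).
  destruct Hg as [_ [Hxl _]].
  replace (y ⊕ x) with (a ⊕ (zr a ⊕ x)).
  - apply ingroup_add; auto.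
  - destruct Hag as [_ [_ [Har _]]]. rewrite addA, Har. unfold a. rewrite <- addA, Hxl. reflexivity.
Qed.

Lemma RegMulL : forall x y, add_regular add x -> add_regular add (y ⊗ x).
Proof.
  intros x y Hx. pose proof (reg_group _ Hx) as Hg.
  destruct Hg as [He [Hl [Hr _]]].
  assert (H1 : add_regular add (y ⊗ zr x)).
  { apply (ingroup_reg _ (y ⊗ zr x)). apply ingroup_idem. apply idem_mull; auto. }
  assert (H2 : le (y ⊗ zr x) (y ⊗ x)).
  { unfold le. rewrite zr_of_idem by (apply idem_mull; auto). apply prec_mull, prec_self. }
  pose proof (RegAddL _ _ H1 H2) as H. rewrite <- mulDl, Hr in H. exact H.
Qed.

Lemma MH : forall x y, add_regular add x -> add_regular add y -> zr (x ⊗ y) = zr x ⊗ zr y.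
Proof.
  intros x y Hx Hy.
  pose proof (reg_group _ Hx) as [Hex [Hxl [Hxr [x' [Hx1 Hx2]]]]].
  pose proof (reg_group _ Hy) as [Hey [Hyl [Hyr [y' [Hy1 Hy2]]]]].
  pose proof (reg_group _ (ingroup_reg _ _ (RegMulR x y Hx))) as [Hk [Hkl _]].
  set (k := zr (x ⊗ y)) in *.
  assert (E1 : zr x ⊗ zr y = k ⊕ zr x ⊗ zr y).
  { rewrite <- Hx1, <- Hy1. rewrite mulDr, !mulDl. rewrite !addA. rewrite Hkl. reflexivity. }
  assert (E2 : k ⊕ zr x ⊗ zr y = k).
  { apply idem_rho; auto.
    - apply idem_mulr. auto.
    - apply (rho_trans _ (x ⊗ y)). apply rho_sym, rho_zr.
      apply (rho_trans _ (zr x ⊗ y)). apply rho_mulr, rho_zr. apply rho_mull, rho_zr. }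
  congruence.
Qed.

Lemma zr_sq : forall b, zr (b ⊗ b) = zr b.
Proof.
  intros b. destruct (C1 b) as [n [Hn Hr]].
  pose proof (MH _ _ Hr Hr) as H. rewrite !zr_nsum in H by auto.
  rewrite (C3 (zr b)) in H by apply zr_idem.
  rewrite <- nsum_mulr, <- nsum_mull in H. rewrite !zr_nsum in H by auto. exact H.
Qed.


Lemma core_ii : quasi_completely_regular add mul /\
  (forall e f, add_idem add e -> add_idem add f ->
     exists n, 0 < n /\ ns n (e ⊕ f) = ns n (e ⊕ f ⊕ e)).
Proof.
  split.
  - intros a. destruct (C1 a) as [n [Hn Hr]]. exists n. split; auto.
    set (u := ns n a) in *.
    pose proof (reg_group _ Hr) as Hg.
    pose proof Hg as [He [Hl [Hrr [v [Hv1 Hv2]]]]].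
    exists v. split; [|split].
    + rewrite Hv1. congruence.
    + congruence.
    + rewrite Hv1. apply ingroup_idem_eq.
      * pose proof (RegMulR u (zr u) Hr) as G. rewrite (C3 _ He) in G. exact G.
      * apply idem_mull. exact He.
  - intros e f He Hf. set (c := e ⊕ f).
    destruct (C1 c) as [n [Hn Hr]]. exists n. split; auto.
    unfold add_idem in *.
    rewrite nsum_conj by (auto; unfold c; rewrite addA, He; reflexivity).
    pose proof (reg_group _ Hr) as [Hz [_ [Hzr _]]].
    rewrite zr_nsum in Hz, Hzr by auto.
    assert (P : zr c ⊕ e = zr c).
    { apply prec_idem; auto. unfold c. apply le_addl. }
    symmetry. rewrite <- Hzr at 1. rewrite <- addA, P, Hzr. reflexivity.
Qed.

Lemma same_group_H : forall u w e, ingroup u e -> ingroup w e ->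
  greenL add u w /\ greenR add u w.
Proof.
  intros u w e [He [Hul [Hur [u' [Hu1 Hu2]]]]] [_ [Hwl [Hwr [w' [Hw1 Hw2]]]]].
  split; split; right.
  - exists (u ⊕ w'). rewrite <- addA, Hw2. auto.
  - exists (w ⊕ u'). rewrite <- addA, Hu2. auto.
  - exists (w' ⊕ u). rewrite addA, Hw1. auto.
  - exists (u' ⊕ w). rewrite addA, Hu1. auto.
Qed.

Lemma core_iii : add_quasi_regular add /\ (forall b, Hstar add (b ⊗ b) b) /\
  (forall a x, a = a ⊕ x ⊕ a -> a ⊕ x = a ⊕ (x ⊕ x) ⊕ a).
Proof.
  split; [|split].
  - exact C1.
  - intros b. assert (G : forall ma mb, is_m add (b ⊗ b) ma -> is_m add b mb ->
        greenL add (ns ma (b ⊗ b)) (ns mb b) /\ greenR add (ns ma (b ⊗ b)) (ns mb b)).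
    { intros ma mb [Hma [Hra _]] [Hmb [Hrb _]].
      pose proof (reg_group _ Hra) as G1. pose proof (reg_group _ Hrb) as G2.
      rewrite zr_nsum, zr_sq in G1 by auto. rewrite zr_nsum in G2 by auto.
      exact (same_group_H _ _ _ G1 G2). }
    split; intros ma mb H1 H2; apply (G ma mb H1 H2).
  - intros a x Hax. pose proof (KL _ _ Hax) as Hg.
    pose proof (zr_group _ _ Hg) as Hz.
    assert (Hf : x ⊕ a ⊕ (x ⊕ a) = x ⊕ a).
    { replace (x ⊕ a ⊕ (x ⊕ a)) with (x ⊕ (a ⊕ x ⊕ a)) by aac. rewrite <- Hax. reflexivity. }
    assert (L1 : le a x).
    { assert (H : le (a ⊕ x ⊕ a) x) by (apply (le_trans _ (a ⊕ x)); [apply le_addl|apply le_addr]).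
      rewrite <- Hax in H. exact H. }
    assert (L2 : le a (x ⊕ a)) by (apply le_glb; auto; apply le_refl).
    unfold le in L2. rewrite Hz in L2.
    destruct Hg as [He _].
    pose proof (prec_idem _ _ He Hf L2) as H.
    replace (a ⊕ (x ⊕ x) ⊕ a) with (a ⊕ x ⊕ (x ⊕ a)) by aac. congruence.
Qed.

Section Class.
Variable a0 : X.

Definition e0 := zr a0.
Definition Kc (x : X) : Prop := rho a0 x /\ add_regular add x.
Definition Lt := {e : X | e ⊕ e = e /\ rho a0 e}.
Definition Rt := {r : X | ingroup r e0}.

Lemma e0_idem : e0 ⊕ e0 = e0.
Proof. apply zr_idem. Qed.

Lemma rho_e0 : rho a0 e0.
Proof. apply rho_zr. Qed.

Lemma LZ : forall f g, f ⊕ f = f -> rho a0 f -> g ⊕ g = g -> rho a0 g -> f ⊕ g = f.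
Proof.
  intros f g Hf Hrf Hg Hrg. apply idem_rho; auto.
  apply (rho_trans _ a0); auto. apply rho_sym; auto.
Qed.

Lemma Rt_rho : forall r, ingroup r e0 -> rho a0 r.
Proof.
  intros r H. apply (rho_trans _ e0). apply rho_e0.
  pose proof (rho_zr r) as Hr. rewrite (zr_group _ _ H) in Hr. apply rho_sym. exact Hr.
Qed.

Lemma cls_add : forall x y, rho a0 x -> rho a0 y -> rho a0 (x ⊕ y).
Proof.
  intros x y Hx Hy. apply (rho_trans _ (a0 ⊕ a0)). apply rho_sym, rho_addidem.
  apply (rho_trans _ (x ⊕ a0)). apply rho_addr; auto. apply rho_addl; auto.
Qed.

Lemma cls_mul : forall x y, rho a0 x -> rho a0 y -> rho a0 (x ⊗ y).
Proof.
  intros x y Hx Hy. apply (rho_trans _ (a0 ⊗ a0)). apply rho_sym, rho_sq.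
  apply (rho_trans _ (x ⊗ a0)). apply rho_mulr; auto. apply rho_mull; auto.
Qed.

Lemma prec_e0 : forall y, rho a0 y -> prec e0 y.
Proof.
  intros y H. assert (H' : rho e0 y) by (apply (rho_trans _ a0); [apply rho_sym, rho_e0|auto]).
  destruct H' as [H1 _]. unfold le in H1. rewrite zr_of_idem in H1 by apply e0_idem. exact H1.
Qed.

Lemma Kabs : forall x f, Kc x -> f ⊕ f = f -> rho a0 f -> x ⊕ f = x.
Proof.
  intros x f [Hx Hreg] Hf Hrf. pose proof (reg_group _ Hreg) as [Hz [_ [Hr _]]].
  assert (H : zr x ⊕ f = zr x).
  { apply LZ; auto. apply (rho_trans _ x); auto. apply rho_zr. }
  rewrite <- Hr at 1. rewrite <- addA, H, Hr. reflexivity.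
Qed.

Lemma Lmul_ok : forall x y : X, x ⊕ x = x /\ rho a0 x -> y ⊕ y = y /\ rho a0 y ->
  x ⊗ y ⊕ x ⊗ y = x ⊗ y /\ rho a0 (x ⊗ y).
Proof.
  intros x y [Hx Hrx] [Hy Hry]. split. apply idem_mull; auto. apply cls_mul; auto.
Qed.

Lemma Rmul_ok : forall x y, ingroup x e0 -> ingroup y e0 -> ingroup (e0 ⊕ x ⊗ y) e0.
Proof.
  intros x y Hx Hy. apply W. apply e0_idem. apply prec_e0. apply cls_mul; apply Rt_rho; auto.
Qed.

Definition addL (x y : Lt) : Lt := x.
Definition mulL (x y : Lt) : Lt :=
  exist _ (proj1_sig x ⊗ proj1_sig y) (Lmul_ok _ _ (proj2_sig x) (proj2_sig y)).
Definition addR (x y : Rt) : Rt :=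
  exist _ (proj1_sig x ⊕ proj1_sig y) (ingroup_add _ _ _ (proj2_sig x) (proj2_sig y)).
Definition mulR (x y : Rt) : Rt :=
  exist _ (e0 ⊕ proj1_sig x ⊗ proj1_sig y) (Rmul_ok _ _ (proj2_sig x) (proj2_sig y)).

Lemma sig_eq : forall (P : X -> Prop) (x y : {z | P z}), proj1_sig x = proj1_sig y -> x = y.
Proof.
  intros P [x Hx] [y Hy]. simpl. intros ->. f_equal. apply proof_irrelevance.
Qed.

Lemma L_lzs : left_zero_semiring addL mulL.
Proof.
  split; [|split].
  - split; [|split; [|split]]; intros; try reflexivity.
    apply sig_eq. simpl. apply mulA.
  - intros [x [Hx Hrx]]. apply sig_eq. simpl. apply C3. exact Hx.
  - intros; reflexivity.
Qed.

Lemma Kc_mul : forall x y, Kc x -> Kc y -> Kc (x ⊗ y).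
Proof.
  intros x y [Hx Hrx] [Hy Hry]. split. apply cls_mul; auto.
  exact (ingroup_reg _ _ (RegMulR _ y Hrx)).
Qed.

Lemma Rt_K : forall r, ingroup r e0 -> Kc r.
Proof. intros r H. split. apply Rt_rho; auto. exact (ingroup_reg _ _ H). Qed.

Lemma R_skew : skew_ring addR mulR.
Proof.
  split.
  - split; [|split; [|split]].
    + intros. apply sig_eq. simpl. apply addA.
    + intros [x Hx] [y Hy] [z Hz]. apply sig_eq. simpl.
      rewrite mulDl, mulDr, !addA.
      rewrite (LZ e0 (x ⊗ e0)), (LZ e0 (e0 ⊗ z)); try apply e0_idem; try apply rho_e0.
      * rewrite !mulA. reflexivity.
      * apply idem_mulr, e0_idem.
      * apply cls_mul; [apply rho_e0|apply Rt_rho; auto].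
      * apply idem_mull, e0_idem.
      * apply cls_mul; [apply Rt_rho; auto|apply rho_e0].
    + intros [x Hx] [y Hy] [z Hz]. apply sig_eq. simpl.
      rewrite mulDl. replace (e0 ⊕ x ⊗ y ⊕ (e0 ⊕ x ⊗ z)) with (e0 ⊕ (x ⊗ y ⊕ e0) ⊕ x ⊗ z) by aac.
      rewrite (Kabs (x ⊗ y) e0); [aac| | |].
      * apply Kc_mul; apply Rt_K; auto.
      * apply e0_idem.
      * apply rho_e0.
    + intros [x Hx] [y Hy] [z Hz]. apply sig_eq. simpl.
      rewrite mulDr. replace (e0 ⊕ y ⊗ x ⊕ (e0 ⊕ z ⊗ x)) with (e0 ⊕ (y ⊗ x ⊕ e0) ⊕ z ⊗ x) by aac.
      rewrite (Kabs (y ⊗ x) e0); [aac| | |].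
      * apply Kc_mul; apply Rt_K; auto.
      * apply e0_idem.
      * apply rho_e0.
  - exists (exist (fun r => ingroup r e0) e0 (ingroup_idem _ e0_idem)). split.
    + intros [x Hx]. pose proof Hx as [He [Hl [Hr _]]]. split; apply sig_eq; simpl; auto.
    + intros [x Hx]. destruct (ingroup_inv _ _ Hx) as [b [Hb [H1 H2]]].
      exists (exist (fun r => ingroup r e0) b Hb). split; apply sig_eq; simpl; auto.
Qed.

Lemma F_ex : forall x : X, exists p : Lt * Rt,
  Kc x -> proj1_sig (fst p) = zr x /\ proj1_sig (snd p) = e0 ⊕ x.
Proof.
  intros x. destruct (classic (Kc x)) as [Hk|Hk].
  - assert (H1 : zr x ⊕ zr x = zr x /\ rho a0 (zr x)).
    { split. apply zr_idem. apply (rho_trans _ x). apply Hk. apply rho_zr. }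
    assert (H2 : ingroup (e0 ⊕ x) e0).
    { apply W. apply e0_idem. apply prec_e0. apply Hk. }
    exists (exist _ (zr x) H1, exist _ (e0 ⊕ x) H2). intros _. split; reflexivity.
  - exists (exist (fun e => e ⊕ e = e /\ rho a0 e) e0 (conj e0_idem rho_e0), exist (fun r => ingroup r e0) e0 (ingroup_idem _ e0_idem)).
    intros H. contradiction.
Qed.

Definition F (x : X) : Lt * Rt := proj1_sig (constructive_indefinite_description _ (F_ex x)).

Lemma F_spec : forall x, Kc x -> proj1_sig (fst (F x)) = zr x /\ proj1_sig (snd (F x)) = e0 ⊕ x.
Proof.
  intros x. unfold F. destruct (constructive_indefinite_description _ _) as [p Hp]. exact Hp.
Qed.

Lemma pair_eq : forall p q : Lt * Rt, proj1_sig (fst p) = proj1_sig (fst q) ->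
  proj1_sig (snd p) = proj1_sig (snd q) -> p = q.
Proof.
  intros [p1 p2] [q1 q2]. simpl. intros H1 H2. f_equal; apply sig_eq; auto.
Qed.

Lemma recon : forall x, Kc x -> x = zr x ⊕ (e0 ⊕ x).
Proof.
  intros x Hk. pose proof (reg_group _ (proj2 Hk)) as [Hz [Hl _]].
  rewrite addA. rewrite (LZ (zr x) e0); auto.
  - apply (rho_trans _ x). apply Hk. apply rho_zr.
  - apply e0_idem.
  - apply rho_e0.
Qed.

Lemma class_lsr : left_skew_ring_on add mul Kc.
Proof.
  exists Lt, addL, mulL, Rt, addR, mulR, F.
  split; [exact L_lzs|]. split; [exact R_skew|]. split; [|split; [|split]].
  - intros x y Hx Hy Hxy.
    destruct (F_spec x Hx) as [A1 A2]. destruct (F_spec y Hy) as [B1 B2].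
    rewrite (recon x Hx), (recon y Hy). rewrite <- A1, <- A2, <- B1, <- B2, Hxy. reflexivity.
  - intros [[l [Hl1 Hl2]] [r Hr]].
    assert (Hp : prec l r).
    { assert (H : rho l r) by (apply (rho_trans _ a0); [apply rho_sym; auto|apply Rt_rho; auto]).
      destruct H as [H _]. unfold le in H. rewrite zr_of_idem in H by auto. exact H. }
    pose proof (W _ _ Hl1 Hp) as Hg.
    assert (Hk : Kc (l ⊕ r)).
    { split. apply cls_add; auto. apply Rt_rho; auto. exact (ingroup_reg _ _ Hg). }
    exists (l ⊕ r). split; auto.
    destruct (F_spec _ Hk) as [A1 A2].
    apply pair_eq; unfold addL, addR, mulL, mulR; cbn [fst snd proj1_sig]; rewrite ?A1, ?A2.
    + apply zr_group. exact Hg.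
    + rewrite addA. rewrite (LZ e0 l); auto. apply Hr. apply e0_idem. apply rho_e0.
  - intros x y Hx Hy.
    assert (Hle : le x y) by (apply (rho_trans x a0 y); [apply rho_sym; apply (proj1 Hx)|apply (proj1 Hy)]).
    pose proof (RegAddR _ _ (proj2 Hx) Hle) as Hg.
    assert (Hk : Kc (x ⊕ y)) by (split; [apply cls_add; [apply Hx|apply Hy]|exact (ingroup_reg _ _ Hg)]).
    destruct (F_spec _ Hk) as [A1 A2]. destruct (F_spec x Hx) as [B1 B2]. destruct (F_spec y Hy) as [C1' C2'].
    apply pair_eq; unfold addL, addR, mulL, mulR; cbn [fst snd proj1_sig].
    + rewrite A1, B1. apply zr_group. exact Hg.
    + rewrite A2, B2, C2'.
      replace (e0 ⊕ x ⊕ (e0 ⊕ y)) with (e0 ⊕ (x ⊕ e0) ⊕ y) by aac.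
      rewrite (Kabs x e0 Hx e0_idem rho_e0). aac.
  - intros x y Hx Hy.
    pose proof (Kc_mul _ _ Hx Hy) as Hk.
    destruct (F_spec _ Hk) as [A1 A2]. destruct (F_spec x Hx) as [B1 B2]. destruct (F_spec y Hy) as [C1' C2'].
    apply pair_eq; unfold addL, addR, mulL, mulR; cbn [fst snd proj1_sig].
    + rewrite A1, B1, C1'. apply MH. apply Hx. apply Hy.
    + rewrite A2, B2, C2'.
      rewrite mulDr, !mulDl, !addA.
      rewrite (C3 e0 e0_idem), e0_idem.
      rewrite (LZ e0 (e0 ⊗ y)), (LZ e0 (x ⊗ e0)); auto; try apply e0_idem; try apply rho_e0.
      * apply idem_mull, e0_idem.
      * apply cls_mul. apply Hx. apply rho_e0.
      * apply idem_mulr, e0_idem.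
      * apply cls_mul. apply rho_e0. apply Hy.
Qed.

Lemma class_nil : nil_ext_left_skew_ring_on add mul (rho a0).
Proof.
  exists Kc. split; [|split; [|split]].
  - intros x [H _]. exact H.
  - intros a x Ha Hx.
    assert (Hle : le a x) by (apply (rho_trans a a0 x); [apply rho_sym; apply (proj1 Ha)|apply Hx]).
    split; [split|split; [split|split; split]].
    + apply cls_add. apply Ha. exact Hx.
    + exact (ingroup_reg _ _ (RegAddR _ _ (proj2 Ha) Hle)).
    + apply cls_add. exact Hx. apply Ha.
    + exact (RegAddL _ _ (proj2 Ha) Hle).
    + apply cls_mul. apply Ha. exact Hx.
    + exact (ingroup_reg _ _ (RegMulR _ x (proj2 Ha))).
    + apply cls_mul. exact Hx. apply Ha.
    + exact (RegMulL _ x (proj2 Ha)).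
  - intros a Ha. destruct (C1 a) as [n [Hn Hr]]. exists n. split; auto. split; auto.
    apply (rho_trans _ a); auto. apply (rho_trans _ (zr a)). apply rho_zr.
    rewrite <- (zr_nsum n a) by auto. apply rho_sym, rho_zr.
  - exact class_lsr.
Qed.

End Class.

Lemma core_i : b_lattice_of_nil_ext_left_skew_rings add mul.
Proof.
  exists rho. split; [exact rho_refl|]. split; [exact rho_sym|]. split; [exact rho_trans|].
  split; [intros a b c H; split; [apply rho_addr|split; [apply rho_addl|split; [apply rho_mulr|apply rho_mull]]]; exact H|].
  split; [exact rho_sq|]. split; [exact rho_addidem|]. split; [exact rho_comm|].
  intros a. split; [|exact (class_nil a)].
  intros x y Hx Hy. split; [apply cls_add|apply cls_mul]; auto.
Qed.

End Core.

Definition core_prop : Prop :=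
  (forall a, exists n, 0 < n /\ add_regular add (ns n a)) /\
  (forall r x, r = r ⊕ x ⊕ r -> ingroup r (r ⊕ x)) /\
  (forall e, e ⊕ e = e -> e ⊗ e = e).

Lemma core_to_i : core_prop -> b_lattice_of_nil_ext_left_skew_rings add mul.
Proof. intros [H1 [H2 H3]]. eapply core_i; eauto. Qed.

Lemma core_to_ii : core_prop -> quasi_completely_regular add mul /\
  (forall e f, add_idem add e -> add_idem add f ->
     exists n, 0 < n /\ ns n (e ⊕ f) = ns n (e ⊕ f ⊕ e)).
Proof. intros [H1 [H2 H3]]. eapply core_ii; eauto. Qed.

Lemma core_to_iii : core_prop -> add_quasi_regular add /\ (forall b, Hstar add (b ⊗ b) b) /\
  (forall a x, a = a ⊕ x ⊕ a -> a ⊕ x = a ⊕ (x ⊕ x) ⊕ a).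
Proof. intros [H1 [H2 H3]]. eapply core_iii; eauto. Qed.


Lemma H_idem_eq : forall p q, q ⊕ q = q -> p ⊕ p = p -> greenL add p q -> greenR add p q -> p = q.
Proof.
  intros p q Hq Hp [[E|[x Hx]] _] [_ [E'|[y Hy]]]; auto.
  assert (A : p ⊕ q = p) by (rewrite Hx at 1; rewrite <- addA, Hq; congruence).
  assert (B : p ⊕ q = q) by (rewrite Hy at 1; rewrite addA, Hp; congruence).
  congruence.
Qed.

Lemma iii_core : add_quasi_regular add -> (forall b, Hstar add (b ⊗ b) b) ->
  (forall a x, a = a ⊕ x ⊕ a -> a ⊕ x = a ⊕ (x ⊕ x) ⊕ a) -> core_prop.
Proof.
  intros Hq Hs Hc. split; [exact Hq|split].
  - intros r x H.
    set (x' := x ⊕ r ⊕ x).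
    assert (H1 : r = r ⊕ x' ⊕ r).
    { unfold x'. replace (r ⊕ (x ⊕ r ⊕ x) ⊕ r) with (r ⊕ x ⊕ r ⊕ x ⊕ r) by aac. rewrite <- H. exact H. }
    assert (H2 : x' = x' ⊕ r ⊕ x').
    { unfold x'. replace (x ⊕ r ⊕ x ⊕ r ⊕ (x ⊕ r ⊕ x)) with (x ⊕ (r ⊕ x ⊕ r) ⊕ (x ⊕ r ⊕ x)) by aac.
      rewrite <- H. replace (x ⊕ r ⊕ (x ⊕ r ⊕ x)) with (x ⊕ (r ⊕ x ⊕ r) ⊕ x) by aac. rewrite <- H. reflexivity. }
    assert (Ee : r ⊕ x' = r ⊕ x).
    { unfold x'. replace (r ⊕ (x ⊕ r ⊕ x)) with (r ⊕ x ⊕ r ⊕ x) by aac. rewrite <- H. reflexivity. }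
    assert (Ef : x' ⊕ r = x ⊕ r).
    { unfold x'. replace (x ⊕ r ⊕ x ⊕ r) with (x ⊕ (r ⊕ x ⊕ r)) by aac. rewrite <- H. reflexivity. }
    pose proof (Hc _ _ H1) as A. pose proof (Hc _ _ H2) as B.
    replace (r ⊕ (x' ⊕ x') ⊕ r) with (r ⊕ x' ⊕ (x' ⊕ r)) in A by aac.
    replace (x' ⊕ (r ⊕ r) ⊕ x') with (x' ⊕ r ⊕ (r ⊕ x')) in B by aac.
    rewrite Ee, Ef in A, B. clearbody x'.
    assert (He : r ⊕ x ⊕ (r ⊕ x) = r ⊕ x) by (rewrite addA; rewrite <- H; reflexivity).
    assert (Hrf : r ⊕ (x ⊕ r) = r) by (rewrite addA; symmetry; exact H).
    assert (Hre : r ⊕ (r ⊕ x) = r).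
    { rewrite <- Hrf at 1. rewrite <- addA, <- B, Hrf. reflexivity. }
    split; [exact He|split; [|split]].
    + symmetry. exact H.
    + exact Hre.
    + exists (r ⊕ x ⊕ x ⊕ (r ⊕ x)). split.
      * replace (r ⊕ (r ⊕ x ⊕ x ⊕ (r ⊕ x))) with (r ⊕ (r ⊕ x) ⊕ x ⊕ (r ⊕ x)) by aac.
        rewrite Hre. exact He.
      * replace (r ⊕ x ⊕ x ⊕ (r ⊕ x) ⊕ r) with (r ⊕ x ⊕ x ⊕ (r ⊕ x ⊕ r)) by aac.
        rewrite <- H. replace (r ⊕ x ⊕ x ⊕ r) with (r ⊕ x ⊕ (x ⊕ r)) by aac. symmetry. exact A.
  - intros e He.
    assert (M1 : is_m add e 1).
    { split; [lia|split]. exists e. simpl. rewrite !He. reflexivity. intros; lia. }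
    assert (Hee : e ⊗ e ⊕ e ⊗ e = e ⊗ e) by (apply idem_mull; exact He).
    assert (M2 : is_m add (e ⊗ e) 1).
    { split; [lia|split]. exists (e ⊗ e). simpl. rewrite !Hee. reflexivity. intros; lia. }
    destruct (Hs e) as [HL HR].
    apply H_idem_eq; auto.
    + exact (HL 1 1 M2 M1).
    + exact (HR 1 1 M2 M1).
Qed.

Lemma ii_C3 : quasi_completely_regular add mul -> forall e, e ⊕ e = e -> e ⊗ e = e.
Proof.
  intros Hq e He. destruct (Hq e) as [n [Hn [x [H1 [H2 H3]]]]].
  rewrite nsum_idem in H1, H2, H3 by exact He.
  assert (E : e ⊕ x = e).
  { assert (A : e ⊕ x ⊕ e = e) by (symmetry; exact H1).
    assert (B : e ⊕ x ⊕ e = e ⊕ x) by (rewrite H2, <- addA, He; reflexivity).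
    congruence. }
  rewrite E in H3. exact H3.
Qed.

Lemma ii_core : quasi_completely_regular add mul ->
  (forall e f, add_idem add e -> add_idem add f ->
     exists n, 0 < n /\ ns n (e ⊕ f) = ns n (e ⊕ f ⊕ e)) -> core_prop.
Proof.
  intros Hq HA. pose proof (ii_C3 Hq) as C3'.
  split; [|split; [|exact C3']].
  - intros a. destruct (Hq a) as [n [Hn [x [H1 _]]]]. exists n. split; auto. exists x. exact H1.
  - intros r x H.
    destruct (Hq r) as [n [Hn [x1 [Hu1 [Hc Hm]]]]].
    set (u := ns n r) in *. set (h := u ⊕ x1) in *.
    assert (Hh : h ⊕ h = h) by (unfold h at 2; rewrite addA, <- Hu1; reflexivity).
    assert (Hhu : h ⊕ u = u) by (symmetry; exact Hu1).
    assert (Huh : u ⊕ h = u) by (rewrite Hc, addA; change (u ⊕ x1) with h; exact Hhu).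
    assert (Hh' : h = x1 ⊕ u) by exact Hc.
    assert (M2a : r ⊗ h = h).
    { rewrite <- (nsum_idem n (r ⊗ h)) by (apply idem_mull; exact Hh).
      rewrite nsum_mulr. fold u. exact Hm. }
    assert (M2b : h ⊗ r = h).
    { set (p := h ⊗ u).
      assert (P1 : p ⊕ h = p).
      { transitivity (h ⊗ u ⊕ h ⊗ h). rewrite (C3' h Hh); reflexivity.
        rewrite <- mulDl, Huh; reflexivity. }
      assert (P2 : h = p ⊕ h ⊗ x1).
      { transitivity (h ⊗ h). symmetry; apply C3'; exact Hh.
        change (h ⊗ (u ⊕ x1) = p ⊕ h ⊗ x1). rewrite mulDl; reflexivity. }
      assert (Pp : p ⊕ p = p) by (unfold p; apply idem_mulr; exact Hh).
      assert (Q : p ⊕ (p ⊕ h ⊗ x1) = p ⊕ h ⊗ x1) by (rewrite addA, Pp; reflexivity).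
      rewrite <- P2 in Q.
      assert (Ep : p = h) by congruence.
      rewrite <- (nsum_idem n (h ⊗ r)) by (apply idem_mulr; exact Hh).
      rewrite nsum_mull. fold u. exact Ep. }
    set (e := r ⊕ x).
    assert (He : e ⊕ e = e) by (unfold e; rewrite addA, <- H; reflexivity).
    assert (Her : e ⊕ r = r) by (unfold e; symmetry; exact H).
    assert (S1 : e ⊕ h = h) by (pose proof (nsum_absorb_l n e r Her) as Q; fold u in Q; unfold h; rewrite addA, Q; reflexivity).
    set (p := e ⊗ h).
    assert (S2 : h = p ⊕ h) by (rewrite <- (C3' h Hh) at 1; rewrite <- S1 at 1; rewrite mulDr, (C3' h Hh); reflexivity).
    assert (S3 : h ⊕ p = p).
    { assert (E : p = h ⊕ x ⊗ h) by (unfold p, e; rewrite mulDr, M2a; reflexivity).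
      rewrite E, addA, Hh. reflexivity. }
    assert (S4 : e ⊗ r = p).
    { assert (Ier : e ⊗ r ⊕ e ⊗ r = e ⊗ r) by (apply idem_mulr; exact He).
      assert (E1 : e ⊗ u = e ⊗ r) by (unfold u; rewrite <- nsum_mull; apply nsum_idem; exact Ier).
      assert (E2 : p = e ⊗ u ⊕ e ⊗ x1) by (unfold p, h; rewrite mulDl; reflexivity).
      assert (E3 : e ⊗ u = e ⊗ u ⊕ p) by (unfold p; rewrite <- mulDl, Huh; reflexivity).
      assert (Iu : e ⊗ u ⊕ e ⊗ u = e ⊗ u) by (rewrite E1; exact Ier).
      assert (E4 : e ⊗ u = p).
      { transitivity (e ⊗ u ⊕ p). exact E3. rewrite E2. rewrite addA, Iu. reflexivity. }
      rewrite <- E1. exact E4. }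
    assert (S5 : e = p ⊕ e ⊗ x).
    { rewrite <- (C3' e He) at 1. unfold e at 2. rewrite mulDl, S4. reflexivity. }
    assert (S6 : h ⊕ e = e) by (rewrite S5, addA, S3; reflexivity).
    set (f := x ⊕ r).
    assert (Hf : f ⊕ f = f) by (unfold f; replace (x ⊕ r ⊕ (x ⊕ r)) with (x ⊕ (r ⊕ x ⊕ r)) by aac; rewrite <- H; reflexivity).
    assert (Hrf : r ⊕ f = r) by (unfold f; rewrite addA; symmetry; exact H).
    assert (S1' : h ⊕ f = h) by (pose proof (nsum_absorb_r n f r Hrf) as Q; fold u in Q; rewrite Hh'; rewrite <- addA, Q; reflexivity).
    set (p' := h ⊗ f).
    assert (S2' : h = h ⊕ p') by (rewrite <- (C3' h Hh) at 1; rewrite <- S1' at 2; rewrite mulDl, (C3' h Hh); reflexivity).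
    assert (S3' : p' ⊕ h = p').
    { assert (E : p' = h ⊗ x ⊕ h) by (unfold p', f; rewrite mulDl, M2b; reflexivity).
      rewrite E, <- addA, Hh. reflexivity. }
    assert (S4' : r ⊗ f = p').
    { assert (Irf : r ⊗ f ⊕ r ⊗ f = r ⊗ f) by (apply idem_mull; exact Hf).
      assert (E1 : u ⊗ f = r ⊗ f) by (unfold u; rewrite <- nsum_mulr; apply nsum_idem; exact Irf).
      assert (E2 : p' = x1 ⊗ f ⊕ u ⊗ f) by (unfold p'; rewrite Hh'; rewrite mulDr; reflexivity).
      assert (E3 : u ⊗ f = p' ⊕ u ⊗ f) by (unfold p'; rewrite <- mulDr, Hhu; reflexivity).
      assert (Iu : u ⊗ f ⊕ u ⊗ f = u ⊗ f) by (rewrite E1; exact Irf).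
      assert (E4 : u ⊗ f = p').
      { transitivity (p' ⊕ u ⊗ f). exact E3. rewrite E2. rewrite <- addA, Iu. reflexivity. }
      rewrite <- E1. exact E4. }
    assert (S5' : f = x ⊗ f ⊕ p').
    { rewrite <- (C3' f Hf) at 1. unfold f at 1. rewrite mulDr. fold f. rewrite S4'. reflexivity. }
    assert (S6' : f ⊕ h = f) by (rewrite S5' at 1; rewrite <- addA, S3'; symmetry; exact S5').
    destruct (HA e h He Hh) as [N [HN HNe]].
    rewrite S1, S6 in HNe. rewrite !nsum_idem in HNe by assumption.
    fold e. rewrite <- HNe.
    assert (Hr' : h ⊕ r = r) by (rewrite HNe; exact Her).
    assert (Rh : r ⊕ h = r) by (rewrite <- Hrf at 1; rewrite <- addA, S6'; exact Hrf).
    split; [exact Hh|split; [exact Hr'|split; [exact Rh|]]].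
    exists (h ⊕ x ⊕ h). split.
    + replace (r ⊕ (h ⊕ x ⊕ h)) with (r ⊕ h ⊕ x ⊕ h) by aac.
      rewrite Rh. exact S1.
    + replace (h ⊕ x ⊕ h ⊕ r) with (h ⊕ x ⊕ (h ⊕ r)) by aac.
      rewrite Hr'. rewrite <- addA. exact S1'.
Qed.

Lemma skew_facts : forall (R : Type) (addR mulR : R -> R -> R), skew_ring addR mulR ->
  exists z, (forall a, addR z a = a /\ addR a z = a) /\
    (forall a, exists b, addR a b = z /\ addR b a = z) /\
    (forall a b, addR a b = b -> a = z) /\ mulR z z = z.
Proof.
  intros R addR mulR [[HA [_ [HDl _]]] [z [Hz Hinv]]].
  assert (Hc : forall a b, addR a b = b -> a = z).
  { intros a b H. destruct (Hinv b) as [b' [Hb1 Hb2]].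
    transitivity (addR a z). symmetry; apply Hz. rewrite <- Hb1. rewrite HA, H. reflexivity. }
  exists z. split; [exact Hz|split; [exact Hinv|split; [exact Hc|]]].
  apply (Hc _ (mulR z z)). rewrite <- HDl. rewrite (proj1 (Hz z)). reflexivity.
Qed.

Lemma lsr_facts : forall (K T : X -> Prop), (forall x, K x -> T x) ->
  (forall a x, K a -> T x -> K (a ⊕ x) /\ K (x ⊕ a) /\ K (a ⊗ x) /\ K (x ⊗ a)) ->
  left_skew_ring_on add mul K ->
  (forall k, K k -> add_regular add k) /\
  (forall r p, K r -> K p -> p ⊕ r = r -> r ⊕ p = r /\ exists y, r ⊕ y = p /\ y ⊕ r = p) /\
  (forall e, K e -> e ⊕ e = e -> e ⊗ e = e).
Proof.
  intros K T HKT Hbi [L [addL [mulL [R [addR [mulR [f [HL [HR [Hinj [Hsurj [Hadd Hmul]]]]]]]]]]]].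
  destruct HL as [_ [Hband Hlz]].
  destruct (skew_facts _ _ _ HR) as [z [Hz [Hinv [Hc Hzz]]]].
  assert (Kadd : forall u v, K u -> K v -> K (u ⊕ v)) by (intros u v Hu Hv; apply (Hbi u v Hu (HKT v Hv))).
  assert (Kmul : forall u v, K u -> K v -> K (u ⊗ v)) by (intros u v Hu Hv; apply (Hbi u v Hu (HKT v Hv))).
  destruct HR as [[HRA _] _].
  split; [|split].
  - intros k Hk. destruct (f k) as [l r0] eqn:Ek.
    destruct (Hinv r0) as [b [Hb1 Hb2]].
    destruct (Hsurj (l, b)) as [y [Hy Efy]].
    exists y. symmetry. apply Hinj; auto.
    rewrite Hadd, Hadd, Ek, Efy; auto. simpl. rewrite !Hlz, Hb1, (proj1 (Hz r0)). reflexivity.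
  - intros r p Hr Hp Hpr.
    destruct (f r) as [lr rr] eqn:Er. destruct (f p) as [lp rp] eqn:Ep.
    assert (E1 : f (p ⊕ r) = f r) by (rewrite Hpr; reflexivity).
    rewrite Hadd, Ep, Er in E1 by auto. simpl in E1. rewrite Hlz in E1.
    injection E1 as El Er'. apply Hc in Er'. subst lp rp.
    split.
    + apply Hinj; auto. rewrite Hadd, Ep, Er by auto. simpl. rewrite Hlz, (proj2 (Hz rr)). reflexivity.
    + destruct (Hinv rr) as [b [Hb1 Hb2]].
      destruct (Hsurj (lr, b)) as [y [Hy Efy]].
      exists y. split; apply Hinj; auto.
      * rewrite Hadd, Er, Efy, Ep by auto. simpl. rewrite Hlz, Hb1. reflexivity.
      * rewrite Hadd, Er, Efy, Ep by auto. simpl. rewrite Hlz, Hb2. reflexivity.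
  - intros e He Hee. destruct (f e) as [le0 re] eqn:Ee.
    assert (E1 : f (e ⊕ e) = f e) by (rewrite Hee; reflexivity).
    rewrite Hadd, Ee in E1 by auto. simpl in E1. injection E1 as E1a E1b. apply Hc in E1b. subst re.
    apply Hinj; auto. rewrite Hmul, Ee by auto. simpl. rewrite Hband, Hzz. reflexivity.
Qed.

Lemma i_core : b_lattice_of_nil_ext_left_skew_rings add mul -> core_prop.
Proof.
  intros [rho' [Hrefl [Hsym [Htrans [Hcong [Hsq [Hidem [Hcomm Hcls]]]]]]]].
  split; [|split].
  - intros a. destruct (Hcls a) as [_ [K [HKT [Hbi [Hnil Hlsr]]]]].
    destruct (lsr_facts K (rho' a) HKT Hbi Hlsr) as [F1' _].
    destruct (Hnil a (Hrefl a)) as [n [Hn Hk]]. exists n. split; auto.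
  - intros r x H. destruct (Hcls r) as [_ [K [HKT [Hbi [Hnil Hlsr]]]]].
    destruct (lsr_facts K (rho' r) HKT Hbi Hlsr) as [_ [F2 _]].
    assert (T1 : rho' r (x ⊕ r)).
    { assert (A : rho' (r ⊕ x ⊕ r) (x ⊕ r)).
      { apply (Htrans _ (r ⊕ (r ⊕ x))). apply Hcomm.
        rewrite addA. apply (Htrans _ (r ⊕ x)). apply (Hcong _ _ x (Hidem r)). apply Hcomm. }
      rewrite <- H in A. exact A. }
    assert (T2 : rho' r (x ⊕ r ⊕ x)).
    { apply (Htrans _ (x ⊕ r)); auto. apply Hsym.
      apply (Htrans _ (x ⊕ (x ⊕ r))). apply Hcomm.
      rewrite addA. apply (Hcong _ _ r (Hidem x)). }
    destruct (Hnil (x ⊕ r) T1) as [n [Hn Hk]].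
    assert (Hrr : r ⊕ ns n (x ⊕ r) = r).
    { clear -H HS. induction n as [|n IH].
      - simpl. rewrite addA. symmetry. exact H.
      - destruct n as [|n]. simpl. rewrite addA. symmetry. exact H.
        rewrite nsum_S by lia. rewrite addA, IH. rewrite addA. symmetry. exact H. }
    assert (Kr : K r) by (rewrite <- Hrr; apply (Hbi _ r Hk (Hrefl r))).
    assert (Ep : r ⊕ x = r ⊕ (x ⊕ r ⊕ x)) by (replace (r ⊕ (x ⊕ r ⊕ x)) with (r ⊕ x ⊕ r ⊕ x) by aac; rewrite <- H; reflexivity).
    assert (Kp : K (r ⊕ x)) by (rewrite Ep; apply (Hbi r _ Kr T2)).
    assert (Hpr : r ⊕ x ⊕ r = r) by (symmetry; exact H).
    destruct (F2 r (r ⊕ x) Kr Kp Hpr) as [Hrp Hy].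
    split; [|split; [exact Hpr|split; [exact Hrp|exact Hy]]].
    rewrite addA. rewrite <- H. reflexivity.
  - intros e He. destruct (Hcls e) as [_ [K [HKT [Hbi [Hnil Hlsr]]]]].
    destruct (lsr_facts K (rho' e) HKT Hbi Hlsr) as [_ [_ F3]].
    destruct (Hnil e (Hrefl e)) as [n [Hn Hk]]. rewrite nsum_idem in Hk by exact He.
    apply F3; auto.
Qed.


End Main.

Theorem theorem3p10 (S : Type) (add mul : S -> S -> S)
  (HS : is_semiring add mul) :
  (b_lattice_of_nil_ext_left_skew_rings add mul <->
   (quasi_completely_regular add mul /\
    forall e f, add_idem add e -> add_idem add f ->
      exists n, 0 < n /\ nsum add n (add e f) = nsum add n (add (add e f) e))) /\
  ((quasi_completely_regular add mul /\
    forall e f, add_idem add e -> add_idem add f ->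
      exists n, 0 < n /\ nsum add n (add e f) = nsum add n (add (add e f) e)) <->
   (add_quasi_regular add /\
    (forall b, Hstar add (mul b b) b) /\
    (forall a x, a = add (add a x) a -> add a x = add (add a (add x x)) a))).
Proof.
  split; split.
  - intros Hi. exact (core_to_ii S add mul HS (i_core S add mul HS Hi)).
  - intros [Hq HA]. exact (core_to_i S add mul HS (ii_core S add mul HS Hq HA)).
  - intros [Hq HA]. exact (core_to_iii S add mul HS (ii_core S add mul HS Hq HA)).
  - intros [Hq [Hs Hc]]. exact (core_to_ii S add mul HS (iii_core S add mul HS Hq Hs Hc)).
Qed.
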